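(* Let $\Delta$ be a finite, flag, simply connected simplicial complex, and let $H_\Delta$, $q$, $T$, $p_n$, $p$ and $\theta$ be as described in the context. For all $e\in\mathrm{Edge}(\Delta)$ and $n\in\mathbb{Z}$ the following equalities hold in $H_\Delta$: (i) $\theta(e)=p(q,\iota e)\,e\,p(q,\iota e)^{-1}=p(q,\iota e)\,e^2\,p(\tau e,q)=p(q,\iota e)\,e^2\,p(q,\tau e)^{-1}$; (ii) $\theta(e^n)=p(q,\iota e)\,e^n\,p(\iota e,q)=p(q,\iota e)\,e^{n+1}\,p(\tau e,q)=p(q,\iota e)\,e^{n+1}\,p(q,\tau e)^{-1}$; (iii) if $e_1\cdot\ldots\cdot e_l$ is a combinatorial path then $\theta(e_1^n\cdots e_l^n)=p(q,\iota e_1)\,e_1^{n+1}\cdots e_l^{n+1}\,p(\tau e_l,q)$; (iv) $\theta^{-1}(e)=p_{-1}(q,\iota e)\,p_{-1}(\tau e,q)=p_{-1}(q,\iota e)\,e\,p_{-1}(\iota e,q)=p_{-1}(q,\iota e)\,e\,p_{-1}(q,\iota e)^{-1}$; (v) $\theta^{-1}(e^n)=p_{-1}(q,\iota e)\,e^n\,p_{-1}(\iota e,q)=p_{-1}(q,\iota e)\,e^{n-1}\,p_{-1}(\tau e,q)=p_{-1}(q,\iota e)\,e^{n-1}\,p_{-1}(q,\tau e)^{-1}$; (vi) if $e_1\cdot\ldots\cdot e_l$ is a combinatorial path then $\theta^{-1}(e_1^n\cdots e_l^n)=p_{-1}(q,\iota e_1)\,e_1^{n-1}\cdots e_l^{n-1}\,p_{-1}(\tau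 e_l,q)$; (vii) for all $k\in\mathbb{Z}$, $\theta^k(e)=p_k(q,\iota e)\,e^{k+1}\,p_k(\tau e,q)$.
   Context: $\mathrm{Edge}(\Delta)$ is the set of directed edges of $\Delta$ (each 1-simplex gives two); for $e\in\mathrm{Edge}(\Delta)$, $\iota e$ and $\tau e$ are its initial and terminal vertices and $\overline{e}$ is $e$ with reversed orientation. Directed edges $e_1,\dots,e_l$ form a combinatorial path $e_1\cdot\ldots\cdot e_l$ if $\tau e_i=\iota e_{i+1}$ for all $i$, and a combinatorial 1-cycle if moreover $\tau e_l=\iota e_1$. The Bestvina–Brady group $H_\Delta$ (kernel of the map from the right-angled Artin group of $\Delta$ to $\mathbb{Z}$ sending every standard generator to a fixed generator) is presented by $\mathcal{P}_H=\langle \mathrm{Edge}(\Delta)\mid \mathcal{R}_H\rangle$, where $\mathcal{R}_H$ consists of the words $e\overline{e}$ for $e\in\mathrm{Edge}(\Delta)$ and the words $efg$ and $e^{-1}f^{-1}g^{-1}$ for every combinatorial 1-cycle $e\cdot f\cdot g$. Fix a vertex $q$ and a spanning tree $T$ of the 1-skeleton of $\Delta$. For $n\in\mathbb{Z}$ and vertices $u,v$, $p_n(u,v)$ denotes $e_1^n\cdots e_l^n$ where $e_1\cdot\ldots\cdot e_l$ is the unique geodesic combinatorial path in $T$ from $u$ to $v$, and $p(u,v)=p_1(u,v)$. For $e\in\mathrm{Edge}(\Delta)$ let $w_e=p(q,\iota e)\,e\,p(\iota e,q)$; it is known that $e\mapsto w_e$ defines an automorphism $\theta$ of $H_\Delta$.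 *)

(* Defs.v *)
From mathcomp Require Import all_boot all_order all_algebra.
Set Implicit Arguments. Unset Strict Implicit. Unset Printing Implicit Defensive.
Import GRing.Theory.

(* A finite flag simplicial complex Delta is determined by its 1-skeleton:
   a simple graph (symmetric, irreflexive [adj]) on a finite vertex type V;
   its simplices are the cliques.  Only the 2-skeleton (triangles) matters below. *)

Section BestvinaBrady.
Variables (V : finType) (adj : rel V).

(* directed edges: pairs (iota e, tau e); reversal of e = (e.2, e.1) *)
Definition dedge := (V * V)%type.
(* a letter is a generator (false, e) or its formal inverse (true, e) *)
Definition letter := (bool * dedge)%type.
Definition word := seq letter.

Definition linv (x : letter) : letter := (~~ x.1, x.2).
Definition winv (w : word) : word := rev (map linv w).
Definition gen (e : dedge) : word := [:: (false, e)].
Definition epow (e : dedge) (n : int) : word :=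
  match n with
  | Posz m => nseq m (false, e)
  | Negz m => nseq m.+1 (true, e)
  end.

Definition relator (r : word) : Prop :=
  (exists u v, adj u v /\ r = [:: (false, (u, v)); (false, (v, u))]) \/
  (exists a b c, [/\ adj a b, adj b c & adj c a] /\
     (r = [:: (false, (a, b)); (false, (b, c)); (false, (c, a))] \/
      r = [:: (true, (a, b)); (true, (b, c)); (true, (c, a))])).

(* Equality in the group presented by <Edge | R_H>: the congruence on words
   generated by free cancellation and by the relators. *)
Inductive heq : word -> word -> Prop :=
| heq_refl w : heq w w
| heq_sym w1 w2 : heq w1 w2 -> heq w2 w1
| heq_trans w1 w2 w3 : heq w1 w2 -> heq w2 w3 -> heq w1 w3
| heq_free w1 w2 x : heq (w1 ++ x :: linv x :: w2) (w1 ++ w2)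
| heq_rel w1 w2 r : relator r -> heq (w1 ++ r ++ w2) (w1 ++ w2).

(* Combinatorial homotopy of edge paths (vertex sequences) in the 2-skeleton *)
Inductive ehom : seq V -> seq V -> Prop :=
| eh_refl s : ehom s s
| eh_sym s1 s2 : ehom s1 s2 -> ehom s2 s1
| eh_trans s1 s2 s3 : ehom s1 s2 -> ehom s2 s3 -> ehom s1 s3
| eh_back s1 s2 a b : adj a b ->
    ehom (s1 ++ [:: a; b; a] ++ s2) (s1 ++ a :: s2)
| eh_tri s1 s2 a b c : adj a b -> adj b c -> adj a c ->
    ehom (s1 ++ [:: a; b; c] ++ s2) (s1 ++ [:: a; c] ++ s2).

Definition simply_connected : Prop :=
  (forall u v, connect adj u v) /\
  (forall x s, path adj x s -> last x s = x -> ehom (x :: s) [:: x]).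

Definition spanning_tree (t : rel V) : Prop :=
  [/\ symmetric t, subrel t adj, (forall u v, connect t u v) &
      (forall u s1 s2, path t u s1 -> path t u s2 -> uniq (u :: s1) ->
         uniq (u :: s2) -> last u s1 = last u s2 -> s1 = s2)].

(* tp u v is the vertex list (after u) of the unique geodesic path in t from u to v *)
Definition tree_path_fun (t : rel V) (tp : V -> V -> seq V) : Prop :=
  forall u v, [/\ path t u (tp u v), last u (tp u v) = v & uniq (u :: tp u v)].

Definition vedges (u : V) (s : seq V) : seq dedge := zip (u :: s) s.

Definition powpath (es : seq dedge) (n : int) : word :=
  flatten [seq epow f n | f <- es].

Definition pn (tp : V -> V -> seq V) (n : int) (u v : V) : word :=
  powpath (vedges u (tp u v)) n.

Definition w_e (tp : V -> V -> seq V) (q : V) (e : dedge) : word :=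
  pn tp 1 q e.1 ++ gen e ++ pn tp 1 e.1 q.

Definition theta (tp : V -> V -> seq V) (q : V) (w : word) : word :=
  flatten [seq (if x.1 then winv (w_e tp q x.2) else w_e tp q x.2) | x <- w].

(* "theta^k (x) = y" in H_Delta, for k : int.  For k < 0 this uses that
   theta is an automorphism: theta^k(x) = y  iff  theta^(-k)(y) = x. *)
Definition theta_pow_eq (tp : V -> V -> seq V) (q : V) (k : int) (x y : word) : Prop :=
  match k with
  | Posz m => heq (iter m (theta tp q) x) y
  | Negz m => heq (iter m.+1 (theta tp q) y) x
  end.

End BestvinaBrady.

(* Main.v *)
Require Import Defs.
From Stdlib Require Import Setoid Morphisms.
From mathcomp Require Import all_boot all_order all_algebra zify.
Import GRing.Theory.
Local Open Scope ring_scope.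

Section S.
Variables (V : finType) (adj : rel V).
Local Notation H := (heq adj).
Local Hint Resolve heq_refl : core.

Lemma heq_ctx a b c d : H a b -> H (c ++ a ++ d) (c ++ b ++ d).
Proof.
elim=> {a b} [w|w1 w2 _ IH|w1 w2 w3 _ IH1 _ IH2|w1 w2 x|w1 w2 r Hr].
- exact: heq_refl.
- exact: heq_sym.
- exact: heq_trans IH1 IH2.
- by have := heq_free adj (c ++ w1) (w2 ++ d) x; rewrite -!catA.
- by have := heq_rel (c ++ w1) (w2 ++ d) Hr; rewrite -!catA.
Qed.

Global Instance heq_Equiv : Equivalence H.
Proof. split; [exact: heq_refl| exact: heq_sym| exact: heq_trans]. Qed.

Global Instance cat_Proper : Proper (H ==> H ==> H) (@cat (letter V)).
Proof.
move=> a a' Ha b b' Hb. apply: (heq_trans (w2 := a' ++ b)).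
- by have := heq_ctx a a' [::] b Ha; rewrite /= .
- by have := heq_ctx b b' a' [::] Hb; rewrite !cats0.
Qed.

Global Instance cons_Proper x : Proper (H ==> H) (cons x).
Proof. move=> a b Hab. by have := heq_ctx a b [:: x] [::] Hab; rewrite !cats0. Qed.

Lemma linvK (x : letter V) : linv (linv x) = x.
Proof. by case: x => [[] ?]. Qed.

Lemma winvK (w : word V) : winv (winv w) = w.
Proof. by rewrite /winv map_rev revK -map_comp (eq_map linvK) map_id. Qed.

Lemma winv_cat (a b : word V) : winv (a ++ b) = winv b ++ winv a.
Proof. by rewrite /winv map_cat rev_cat. Qed.

Lemma winv_cons (x : letter V) (w : word V) : winv (x :: w) = winv w ++ [:: linv x].
Proof. by rewrite /winv /= rev_cons cats1. Qed.

Lemma freeH (x : letter V) r : H (x :: linv x :: r) r.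
Proof. exact: (heq_free adj [::] r x). Qed.

Lemma invr w r : H (w ++ winv w ++ r) r.
Proof.
elim: w r => [|x w IH] r; first exact: heq_refl.
rewrite winv_cons -catA cat_cons IH /=. exact: freeH.
Qed.

Lemma invl w r : H (winv w ++ w ++ r) r.
Proof. by have := invr (winv w) r; rewrite winvK. Qed.

Lemma invr0 w : H (w ++ winv w) [::].
Proof. by have := invr w [::]; rewrite cats0. Qed.
Lemma invl0 w : H (winv w ++ w) [::].
Proof. by have := invl w [::]; rewrite cats0. Qed.

Lemma inv_uniq a b : H (a ++ b) [::] -> H b (winv a).
Proof.
move=> Hab. apply: heq_trans (heq_sym (invl a b)) _.
rewrite Hab cats0. exact: heq_refl.
Qed.

Global Instance winv_Proper : Proper (H ==> H) (@winv V).
Proof.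
move=> a b Hab. apply: heq_sym. apply: inv_uniq.
rewrite Hab invr0. reflexivity.
Qed.


Hypothesis adj_sym : ssrbool.symmetric adj.

Fixpoint wl (l : seq V) : word V :=
  match l with x :: ((y :: _) as s) => (false, (x, y)) :: wl s | _ => [::] end.

Lemma wl_cat s1 x s2 : wl (s1 ++ x :: s2) = wl (rcons s1 x) ++ wl (x :: s2).
Proof.
elim: s1 => [|y s1 IH] //=.
case: s1 IH => [|z s1] IH //=.
move: IH => /= ->. by [].
Qed.

Lemma wl_catl x s1 s2 : wl (x :: s1 ++ s2) = wl (x :: s1) ++ wl (last x s1 :: s2).
Proof.
elim: s1 x => [|y s1 IH] x; first by [].
rewrite cat_cons.
change (wl (x :: y :: (s1 ++ s2))) with ((false,(x,y)) :: wl (y :: s1 ++ s2)).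
change (wl (x :: y :: s1)) with ((false,(x,y)) :: wl (y :: s1)).
by rewrite IH.
Qed.

Lemma edge_rel u v r : adj u v -> H ((false,(u,v)) :: (false,(v,u)) :: r) r.
Proof.
move=> uv. have := @heq_rel V adj [::] r [:: (false,(u,v)); (false,(v,u))].
apply. left. by exists u, v.
Qed.

Lemma tri_rel a b c r : adj a b -> adj b c -> adj a c ->
  H ((false,(a,b)) :: (false,(b,c)) :: r) ((false,(a,c)) :: r).
Proof.
move=> ab bc ac.
have ca : adj c a by rewrite adj_sym.
have R : H ((false,(a,b)) :: (false,(b,c)) :: (false,(c,a)) :: (false,(a,c)) :: r)
          ((false,(a,c)) :: r).
  have := @heq_rel V adj [::] ((false,(a,c)) :: r)
     [:: (false,(a,b)); (false,(b,c)); (false,(c,a))].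
  apply. right. exists a, b, c. split; first by split. by left.
rewrite -R. rewrite (edge_rel _ _ _ ca). reflexivity.
Qed.

Lemma wl_ehom s1 s2 : ehom adj s1 s2 -> H (wl s1) (wl s2).
Proof.
elim=> {s1 s2} [s|s1 s2 _ IH|s1 s2 s3 _ IH1 _ IH2|s1 s2 a b ab|s1 s2 a b c ab bc ac].
- reflexivity.
- by symmetry.
- by rewrite IH1.
- rewrite /= !wl_cat /=. rewrite (edge_rel _ _ _ ab). reflexivity.
- rewrite /= !wl_cat /=. rewrite (tri_rel _ _ _ _ ab bc ac). reflexivity.
Qed.

Hypothesis loops : forall x s, path adj x s -> last x s = x -> ehom adj (x :: s) [:: x].

Lemma loop_wl x s : path adj x s -> last x s = x -> H (wl (x :: s)) [::].
Proof. move=> p l. exact: (wl_ehom _ _ (loops x s p l)). Qed.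


Lemma powpath1 x s : powpath (vedges x s) 1 = wl (x :: s).
Proof.
elim: s x => [|y s IH] x; first by [].
change (wl (x :: y :: s)) with ((false,(x,y)) :: wl (y :: s)).
rewrite -IH. by [].
Qed.

Variables (q : V) (t : rel V) (tp : V -> V -> seq V).
Hypothesis tsub : ssrbool.subrel t adj.
Hypothesis tpP : tree_path_fun t tp.

Lemma tp_path x y : path adj x (tp x y).
Proof. case: (tpP x y) => p _ _. exact: (sub_path tsub p). Qed.
Lemma tp_last x y : last x (tp x y) = y.
Proof. by case: (tpP x y). Qed.

Local Notation g u := (pn tp 1 q u).
Local Notation h u := (pn tp 1 u q).

Lemma pn1 x y : pn tp 1 x y = wl (x :: tp x y).
Proof. exact: powpath1. Qed.

Lemma gh0 u : H (g u ++ h u) [::].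
Proof.
rewrite !pn1. have := wl_catl q (tp q u) (tp u q). rewrite tp_last => <-.
apply: loop_wl.
- by rewrite cat_path tp_path tp_last tp_path.
- by rewrite last_cat tp_last tp_last.
Qed.

Lemma hg0 u : H (h u ++ g u) [::].
Proof.
rewrite !pn1. have := wl_catl u (tp u q) (tp q u). rewrite tp_last => <-.
apply: loop_wl.
- by rewrite cat_path tp_path tp_last tp_path.
- by rewrite last_cat tp_last tp_last.
Qed.

Lemma edge_inv u v : adj u v -> H [:: (true,(v,u))] [:: (false,(u,v))].
Proof.
move=> uv.
have E : H [:: (false,(v,u))] (winv [:: (false,(u,v))]).
  apply: inv_uniq. exact: edge_rel.
have := winv_Proper _ _ E. rewrite winvK. by apply.
Qed.

Lemma hg_edge u v : adj u v -> H (h u ++ g v) [:: (false,(u,v))].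
Proof.
move=> uv.
have L : H (h u ++ g v ++ [:: (false,(v,u))]) [::].
  have E1 : wl (q :: tp q v ++ [::u]) = wl (q :: tp q v) ++ [:: (false,(v,u))].
    by rewrite wl_catl tp_last.
  have E2 : wl (u :: tp u q ++ (tp q v ++ [::u])) =
     wl (u :: tp u q) ++ wl (q :: tp q v ++ [::u]) by rewrite wl_catl tp_last.
  rewrite !pn1 -E1 -E2.
  apply: loop_wl.
  - rewrite cat_path tp_path tp_last cat_path tp_path tp_last /=.
    by rewrite adj_sym uv.
  - by rewrite !last_cat.
rewrite catA in L.
apply: heq_trans (_ : H _ (((h u ++ g v) ++ [:: (false,(v,u))]) ++ winv [:: (false,(v,u))])) _.
  rewrite -catA invr0 cats0. reflexivity.
rewrite L /=. exact: edge_inv.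
Qed.

Lemma h_winv u : H (h u) (winv (g u)).
Proof. apply: inv_uniq. exact: gh0. Qed.

Lemma g_winv u : H (g u) (winv (h u)).
Proof. apply: inv_uniq. exact: hg0. Qed.

Lemma gh_r u r : H (g u ++ h u ++ r) r.
Proof. by rewrite catA gh0. Qed.

Lemma hg_r u r : H (h u ++ g u ++ r) r.
Proof. by rewrite catA hg0. Qed.

Lemma hg_edge_r u v r : adj u v -> H (h u ++ g v ++ r) ((false,(u,v)) :: r).
Proof. move=> uv. by rewrite catA hg_edge. Qed.

Lemma hstep u v r : adj u v -> H (h u ++ r) ((false,(u,v)) :: h v ++ r).
Proof.
move=> uv. rewrite -(hg_edge_r _ _ _ uv).
by rewrite (gh_r v r).
Qed.


Local Notation th := (theta tp q).

Lemma th_cat a b : th (a ++ b) = th a ++ th b.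
Proof. by rewrite /theta map_cat flatten_cat. Qed.

Lemma th_cons x w : th (x :: w) = th [:: x] ++ th w.
Proof. by rewrite -th_cat. Qed.

Lemma th_gen x : th [:: x] = (if x.1 then winv (w_e tp q x.2) else w_e tp q x.2).
Proof. by rewrite /theta /= cats0. Qed.

Lemma th_winv w : th (winv w) = winv (th w).
Proof.
elim: w => [|x w IH]; first by [].
rewrite winv_cons th_cat IH (th_cons x w) winv_cat.
case: x => [[] e]; rewrite !th_gen; [by rewrite [(_, e).1]/= winvK | by []].
Qed.

Lemma th_letter x : H (th [:: x]) (g x.2.1 ++ x :: h x.2.1).
Proof.
rewrite th_gen /w_e. case: x => [[] e] /=.
- rewrite !winv_cat winv_cons -catA -g_winv -h_winv. by [].
- by [].
Qed.

Lemma th_nseq k x : H (th (nseq k x)) (g x.2.1 ++ nseq k x ++ h x.2.1).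
Proof.
elim: k => [|k IH] /=; first by symmetry; exact: gh0.
rewrite th_cons IH th_letter -catA /= hg_r. by [].
Qed.

Lemma th_epow e n : H (th (epow e n)) (g e.1 ++ epow e n ++ h e.1).
Proof. by case: n => m; rewrite /epow th_nseq. Qed.

Lemma nseq_cons (x : letter V) m r : nseq m x ++ x :: r = x :: nseq m x ++ r.
Proof. by elim: m => //= m ->. Qed.

Lemma epow_succ e n r : H (epow e n ++ (false,e) :: r) (epow e (n + 1) ++ r).
Proof.
case: n => m.
- have -> : (Posz m + 1)%R = Posz m.+1 by lia.
  change (epow e (Posz m)) with (nseq m (false,e)).
  change (epow e (Posz m.+1)) with ((false,e) :: nseq m (false,e)).
  by rewrite nseq_cons.
- change (epow e (Negz m)) with (nseq m.+1 (true,e)).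
  rewrite cat_cons -nseq_cons (freeH (true,e)).
  case: m => [|m]; first by [].
  have -> : (Negz m.+1 + 1)%R = Negz m by rewrite !NegzE; lia.
  by [].
Qed.


Lemma powpath_cons (u v : V) s n :
  powpath (vedges u (v :: s)) n = epow (u, v) n ++ powpath (vedges v s) n.
Proof. by []. Qed.

Lemma th_powpath u s n : path adj u s ->
  H (th (powpath (vedges u s) n)) (g u ++ powpath (vedges u s) (n + 1) ++ h (last u s)).
Proof.
elim: s u => [|v s IH] u /=.
  move=> _. symmetry. exact: gh0.
case/andP=> uv p.
rewrite !powpath_cons th_cat th_epow (IH _ p) /= -!catA.
rewrite (hstep _ _ _ uv) hg_r epow_succ. by [].
Qed.

Lemma comm3 a b c r : adj a b -> adj b c -> adj c a ->
  H [:: (false,(a,b)), (false,(a,b)), (false,(b,c)), (false,(b,c)),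
        (false,(c,a)), (false,(c,a)) & r] r.
Proof.
move=> ab bc ca.
set x := (false,(a,b)); set y := (false,(b,c)); set z := (false,(c,a)).
have T : forall w, H [:: x, y, z & w] w.
  move=> w. have := @heq_rel V adj [::] w [:: x; y; z]. apply.
  right. exists a, b, c. split; first by split. by left.
have T' : forall w, H [:: linv x, linv y, linv z & w] w.
  move=> w. have := @heq_rel V adj [::] w [:: linv x; linv y; linv z]. apply.
  right. exists a, b, c. split; first by split. by right.
have C : forall w, H [:: x, y & w] [:: y, x & w].
  move=> w.
  have E1 : H [:: x, y & w] (linv z :: w).
    rewrite -{1}(freeH z w). exact: T.
  have E2 : H [:: y, x & w] (linv z :: w).
    apply: heq_trans (_ : H _ [:: y, x, linv x, linv y, linv z & w]) _.
      by rewrite (T' w).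
    by rewrite (freeH x) (freeH y).
  by rewrite E1 E2.
rewrite /=. rewrite (C [:: y, z, z & r]). 
by rewrite T T.
Qed.


Lemma th_w (u v : V) r : H (th ((false, (u, v)) :: r)) (g u ++ (false, (u,v)) :: h u ++ th r).
Proof. rewrite th_cons th_letter -catA. by []. Qed.

Lemma th_rel r : relator adj r -> H (th r) [::].
Proof.
case=> [[u [v [uv ->]]] | [a [b [c [[ab bc ca] [->|->]]]]]].
- rewrite th_w th_w /= cats0 (hg_edge_r _ _ _ uv).
  have vu : adj v u by rewrite adj_sym.
  rewrite (edge_rel _ _ _ uv) -[h v]cats0 -(hstep _ _ _ uv) cats0. exact: gh0.
- rewrite th_w th_w th_w /= cats0 (hg_edge_r _ _ _ ab) (hg_edge_r _ _ _ bc).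
  rewrite -[h c]cats0 (hstep _ _ _ ca) comm3 // cats0. exact: gh0.
- have -> : [:: (true, (a, b)); (true, (b, c)); (true, (c, a))] =
     winv [:: (false, (c, a)); (false, (b, c)); (false, (a, b))] by [].
  rewrite th_winv.
  have cb : adj c b by rewrite adj_sym.
  have ba : adj b a by rewrite adj_sym.
  rewrite th_w th_w th_w /= cats0 (hg_edge_r _ _ _ cb) (hg_edge_r _ _ _ ba).
  rewrite (edge_rel _ _ _ cb) (edge_rel _ _ _ ba) -[h a]cats0 -(hstep _ _ _ ca) cats0 gh0. by [].
Qed.

Lemma th_heq a b : H a b -> H (th a) (th b).
Proof.
elim=> {a b} [w|w1 w2 _ IH|w1 w2 w3 _ IH1 _ IH2|w1 w2 x|w1 w2 r Hr].
- by [].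
- by symmetry.
- by rewrite IH1.
- rewrite !th_cat th_cons (th_cons (linv x)) !th_gen.
  case: x => [[] e] /=; [by rewrite invl | by rewrite invr].
- rewrite !th_cat (th_rel _ Hr). by [].
Qed.


Global Instance th_Proper : Proper (H ==> H) th.
Proof. move=> a b; exact: th_heq. Qed.

Lemma gq0 : H (g q) [::].
Proof. rewrite pn1. apply: loop_wl; [exact: tp_path | exact: tp_last]. Qed.

Lemma hq0 : H (h q) [::].
Proof. exact: gq0. Qed.

Lemma powpath0 (es : seq (dedge V)) : powpath es 0 = [::].
Proof. by elim: es. Qed.

Lemma th_pn k x y : H (th (pn tp k x y)) (g x ++ pn tp (k + 1) x y ++ h y).
Proof. rewrite /pn th_powpath ?tp_last //. exact: tp_path. Qed.

Lemma th_Pm x y : H (th (pn tp (-1) x y)) (g x ++ h y).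
Proof. rewrite th_pn. by rewrite /pn addNr powpath0. Qed.

Lemma iter_th (e : V * V) (k : int) (j : nat) : adj e.1 e.2 ->
  H (iter j th (pn tp k q e.1 ++ epow e (k + 1) ++ pn tp k e.2 q))
    (pn tp (k + j%:Z) q e.1 ++ epow e (k + j%:Z + 1) ++ pn tp (k + j%:Z) e.2 q).
Proof.
case: e => a b /= he. elim: j => [|j IH].
  by rewrite addr0.
rewrite iterS IH !th_cat !th_pn th_epow gq0 cats0 /= -!catA.
rewrite hg_r (hg_edge_r _ _ _ he) epow_succ.
have -> : k + (j.+1)%:Z = k + j%:Z + 1 by lia.
by [].
Qed.


Lemma thinvE x y : H (th y) x -> theta_pow_eq adj tp q (-1) x y.
Proof. by []. Qed.

Lemma main_stmt (e : V * V) (n : int) : adj e.1 e.2 ->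
  let P := pn tp 1 in
  let Pm := pn tp (-1) in
  let thinv := theta_pow_eq adj tp q (-1) in
  [/\ H (th (gen e)) (P q e.1 ++ gen e ++ winv (P q e.1)),
      H (th (gen e)) (P q e.1 ++ epow e 2 ++ P e.2 q) &
      H (th (gen e)) (P q e.1 ++ epow e 2 ++ winv (P q e.2))] /\
  [/\ H (th (epow e n)) (P q e.1 ++ epow e n ++ P e.1 q),
      H (th (epow e n)) (P q e.1 ++ epow e (n + 1) ++ P e.2 q) &
      H (th (epow e n)) (P q e.1 ++ epow e (n + 1) ++ winv (P q e.2))] /\
  (forall (u : V) (s : seq V), s != [::] -> path adj u s ->
     H (th (powpath (vedges u s) n))
       (P q u ++ powpath (vedges u s) (n + 1) ++ P (last u s) q)) /\
  [/\ thinv (gen e) (Pm q e.1 ++ Pm e.2 q),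
      thinv (gen e) (Pm q e.1 ++ gen e ++ Pm e.1 q) &
      thinv (gen e) (Pm q e.1 ++ gen e ++ winv (Pm q e.1))] /\
  [/\ thinv (epow e n) (Pm q e.1 ++ epow e n ++ Pm e.1 q),
      thinv (epow e n) (Pm q e.1 ++ epow e (n - 1) ++ Pm e.2 q) &
      thinv (epow e n) (Pm q e.1 ++ epow e (n - 1) ++ winv (Pm q e.2))] /\
  (forall (u : V) (s : seq V), s != [::] -> path adj u s ->
     thinv (powpath (vedges u s) n)
       (Pm q u ++ powpath (vedges u s) (n - 1) ++ Pm (last u s) q)) /\
  (forall k : int,
     theta_pow_eq adj tp q k (gen e) (pn tp k q e.1 ++ epow e (k + 1) ++ pn tp k e.2 q)).
Proof.
case: e => a b /= ab.
split; [|split; [|split; [|split; [|split; [|split]]]]].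
- split; rewrite /gen th_letter /=.
  + by rewrite -h_winv.
  + by rewrite -[h a]cats0 (hstep _ _ _ ab) cats0.
  + by rewrite -h_winv -[h a]cats0 (hstep _ _ _ ab) cats0.
- split; rewrite th_epow /=.
  + by [].
  + by rewrite -[h a]cats0 (hstep _ _ _ ab) cats0 epow_succ.
  + by rewrite -h_winv -[h a]cats0 (hstep _ _ _ ab) cats0 epow_succ.
- move=> u s _ p. exact: th_powpath.
- split; apply: thinvE.
  + rewrite th_cat !th_Pm gq0 cats0 /= (hg_edge _ _ ab). by [].
  + rewrite th_cat th_cons !th_Pm th_letter gq0 cats0 /= -!catA /= hg_r hg0. by [].
  + rewrite th_cat th_cons th_winv !th_Pm th_letter gq0 /= -g_winv -!catA /= hg_r hg0. by [].
- split; apply: thinvE.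
  + rewrite !th_cat !th_Pm th_epow gq0 /= cats0 -!catA hg_r hg0 cats0. by [].
  + rewrite !th_cat !th_Pm th_epow gq0 /= cats0 -!catA hg_r (hg_edge _ _ ab) epow_succ.
    by rewrite subrK cats0.
  + rewrite !th_cat th_winv !th_Pm th_epow gq0 /= -g_winv -!catA hg_r (hg_edge _ _ ab) epow_succ.
    by rewrite subrK cats0.
- move=> u s _ p. apply: thinvE.
  rewrite !th_cat !th_Pm th_powpath // gq0 /= cats0 -!catA hg_r hg0 cats0 subrK. by [].
- case=> m.
  + have := iter_th (a, b) 0 m ab. rewrite add0r /= /pn !powpath0 /=. by [].
  + have := iter_th (a, b) (Negz m) m.+1 ab.
    have -> : Negz m + (m.+1)%:Z = 0 by rewrite NegzE; lia.
    rewrite /pn !powpath0 /= => E. exact: E.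
Qed.

End S.

Theorem lemma4p1 (V : finType) (adj : rel V) (q : V) (t : rel V)
    (tp : V -> V -> seq V) :
  symmetric adj -> irreflexive adj -> simply_connected adj ->
  spanning_tree adj t -> tree_path_fun t tp ->
  forall (e : V * V) (n : int), adj e.1 e.2 ->
  let H := heq adj in
  let th := theta tp q in
  let P := pn tp 1 in
  let Pm := pn tp (-1) in
  let thinv := theta_pow_eq adj tp q (-1) in
  (* (i) *)
  [/\ H (th (gen e)) (P q e.1 ++ gen e ++ winv (P q e.1)),
      H (th (gen e)) (P q e.1 ++ epow e 2 ++ P e.2 q) &
      H (th (gen e)) (P q e.1 ++ epow e 2 ++ winv (P q e.2))] /\
  (* (ii) *)
  [/\ H (th (epow e n)) (P q e.1 ++ epow e n ++ P e.1 q),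
      H (th (epow e n)) (P q e.1 ++ epow e (n + 1) ++ P e.2 q) &
      H (th (epow e n)) (P q e.1 ++ epow e (n + 1) ++ winv (P q e.2))] /\
  (* (iii) *)
  (forall (u : V) (s : seq V), s != [::] -> path adj u s ->
     H (th (powpath (vedges u s) n))
       (P q u ++ powpath (vedges u s) (n + 1) ++ P (last u s) q)) /\
  (* (iv) *)
  [/\ thinv (gen e) (Pm q e.1 ++ Pm e.2 q),
      thinv (gen e) (Pm q e.1 ++ gen e ++ Pm e.1 q) &
      thinv (gen e) (Pm q e.1 ++ gen e ++ winv (Pm q e.1))] /\
  (* (v) *)
  [/\ thinv (epow e n) (Pm q e.1 ++ epow e n ++ Pm e.1 q),
      thinv (epow e n) (Pm q e.1 ++ epow e (n - 1) ++ Pm e.2 q) &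
      thinv (epow e n) (Pm q e.1 ++ epow e (n - 1) ++ winv (Pm q e.2))] /\
  (* (vi) *)
  (forall (u : V) (s : seq V), s != [::] -> path adj u s ->
     thinv (powpath (vedges u s) n)
       (Pm q u ++ powpath (vedges u s) (n - 1) ++ Pm (last u s) q)) /\
  (* (vii) *)
  (forall k : int,
     theta_pow_eq adj tp q k (gen e) (pn tp k q e.1 ++ epow e (k + 1) ++ pn tp k e.2 q)).
Proof.
move=> adj_sym _ [_ loops] [_ tsub _ _] tpP e n ab.
exact: (@main_stmt V adj adj_sym loops q t tp tsub tpP e n ab).
Qed.
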